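(* If $G_1$ and $G_2$ are vertex-disjoint triangle graphs, then their disjoint union $G_1+G_2$ and their join $G_1*G_2$ are also triangle graphs.
   Context: A graph $G$ is triangle if for every maximal stable set $S$ of $G$ and every edge $uv$ of $G$ with $u,v\notin S$, there is $s\in S$ adjacent to both $u$ and $v$. The join $G_1*G_2$ is obtained from $G_1+G_2$ by adding all edges between $V(G_1)$ and $V(G_2)$. *)

(* Defs.v *)
From mathcomp Require Import all_boot.
Set Implicit Arguments. Unset Strict Implicit. Unset Printing Implicit Defensive.

Record sgraph (T : finType) := SGraph {
  adj : rel T;
  adj_sym : symmetric adj;
  adj_irr : irreflexive adj }.

Definition stable (T : finType) (G : sgraph T) (S : {set T}) : bool :=
  [forall x in S, forall y in S, ~~ adj G x y].

Definition maximal_stable (T : finType) (G : sgraph T) (S : {set T}) : bool :=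
  maxset (stable G) S.

Definition triangle_graph (T : finType) (G : sgraph T) : Prop :=
  forall S : {set T}, maximal_stable G S ->
  forall u v : T, adj G u v -> u \notin S -> v \notin S ->
  exists2 s, s \in S & adj G s u && adj G s v.

Definition union_adj (T1 T2 : finType) (G1 : sgraph T1) (G2 : sgraph T2)
  : rel (T1 + T2)%type :=
  fun x y => match x, y with
  | inl a, inl b => adj G1 a b
  | inr a, inr b => adj G2 a b
  | _, _ => false
  end.

Definition join_adj (T1 T2 : finType) (G1 : sgraph T1) (G2 : sgraph T2)
  : rel (T1 + T2)%type :=
  fun x y => match x, y with
  | inl a, inl b => adj G1 a b
  | inr a, inr b => adj G2 a b
  | _, _ => true
  end.

Lemma union_adj_sym T1 T2 (G1 : sgraph T1) (G2 : sgraph T2) :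
  symmetric (union_adj G1 G2).
Proof. by case=> a [] b //=; rewrite adj_sym. Qed.

Lemma union_adj_irr T1 T2 (G1 : sgraph T1) (G2 : sgraph T2) :
  irreflexive (union_adj G1 G2).
Proof. by case=> a /=; rewrite adj_irr. Qed.

Lemma join_adj_sym T1 T2 (G1 : sgraph T1) (G2 : sgraph T2) :
  symmetric (join_adj G1 G2).
Proof. by case=> a [] b //=; rewrite adj_sym. Qed.

Lemma join_adj_irr T1 T2 (G1 : sgraph T1) (G2 : sgraph T2) :
  irreflexive (join_adj G1 G2).
Proof. by case=> a /=; rewrite adj_irr. Qed.

Definition graph_union T1 T2 (G1 : sgraph T1) (G2 : sgraph T2) : sgraph (T1 + T2)%type :=
  SGraph (@union_adj_sym T1 T2 G1 G2) (@union_adj_irr T1 T2 G1 G2).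

Definition graph_join T1 T2 (G1 : sgraph T1) (G2 : sgraph T2) : sgraph (T1 + T2)%type :=
  SGraph (@join_adj_sym T1 T2 G1 G2) (@join_adj_irr T1 T2 G1 G2).

(* Main.v *)
Require Import Defs.
From mathcomp Require Import all_boot.
Set Implicit Arguments. Unset Strict Implicit.

Section Aux.
Variables (T : finType) (G : sgraph T).

Lemma stableP (S : {set T}) :
  reflect (forall x y, x \in S -> y \in S -> ~~ adj G x y) (stable G S).
Proof.
apply: (iffP forallP) => [H x y xS yS|H x].
  by move: (H x); rewrite xS /= => /forallP/(_ y); rewrite yS.
by apply/implyP=> xS; apply/forallP=> y; apply/implyP=> yS; apply: H.
Qed.

Lemma max_nb (S : {set T}) x : maximal_stable G S -> x \notin S ->
  exists2 s, s \in S & adj G s x.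
Proof.
move=> /maxsetP [st mx] xS.
case: (boolP [exists s in S, adj G s x]) => [/existsP [s /andP [sS a]]|ne].
  by exists s.
have st' : stable G (x |: S).
  apply/stableP=> a b; rewrite !in_setU1 => /predU1P [->|aS] /predU1P [->|bS].
  - by rewrite adj_irr.
  - apply/negP=> ab; move/existsP: ne; apply; exists b; rewrite bS /=.
    by rewrite adj_sym.
  - by apply/negP=> ab; move/existsP: ne; apply; exists a; rewrite aS.
  - by move/stableP: st; apply.
have := mx _ st' (subsetUr _ _) => E.
by move: xS; rewrite -E setU11.
Qed.

Lemma mk_max (S : {set T}) : stable G S ->
  (forall x, x \notin S -> exists2 s, s \in S & adj G s x) ->
  maximal_stable G S.
Proof.
move=> st H; apply/maxsetP; split=> // B stB sSB.
apply/eqP; rewrite eqEsubset sSB andbT; apply/subsetP=> x xB.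
apply/negPn/negP=> xS; have [s sS a] := H x xS.
by move/stableP: stB => /(_ s x (subsetP sSB s sS) xB); rewrite a.
Qed.

Lemma max_nonempty (S : {set T}) x : maximal_stable G S -> x \notin S ->
  exists s, s \in S.
Proof. by move=> m xS; have [s sS _] := max_nb m xS; exists s. Qed.
End Aux.

Section Main.
Variables (T1 T2 : finType) (G1 : sgraph T1) (G2 : sgraph T2).

Lemma restr_l (G : sgraph (T1 + T2)%type) (S : {set T1 + T2}) :
  (forall a b, adj G (inl a) (inl b) = adj G1 a b) ->
  maximal_stable G S ->
  (forall x, x \notin S -> (exists2 s, s \in S & adj G s x) ->
     forall a, x = inl a -> exists2 s, s \in S & adj G s x /\ exists b, s = inl b) ->
  maximal_stable G1 [set a | inl a \in S].
Proof.
move=> E m H; apply: mk_max.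
  apply/stableP=> a b; rewrite !inE => aS bS; rewrite -E.
  by move/maxsetP: m => [/stableP st _]; apply: st.
move=> a; rewrite inE => aS; have [s sS [ad [b sb]]] := H _ aS (max_nb m aS) a erefl.
by exists b; rewrite ?inE -?sb // -E -sb.
Qed.

Lemma restr_r (G : sgraph (T1 + T2)%type) (S : {set T1 + T2}) :
  (forall a b, adj G (inr a) (inr b) = adj G2 a b) ->
  maximal_stable G S ->
  (forall x, x \notin S -> (exists2 s, s \in S & adj G s x) ->
     forall a, x = inr a -> exists2 s, s \in S & adj G s x /\ exists b, s = inr b) ->
  maximal_stable G2 [set a | inr a \in S].
Proof.
move=> E m H; apply: mk_max.
  apply/stableP=> a b; rewrite !inE => aS bS; rewrite -E.
  by move/maxsetP: m => [/stableP st _]; apply: st.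
move=> a; rewrite inE => aS; have [s sS [ad [b sb]]] := H _ aS (max_nb m aS) a erefl.
by exists b; rewrite ?inE -?sb // -E -sb.
Qed.

Lemma union_tri : triangle_graph G1 -> triangle_graph G2 ->
  triangle_graph (graph_union G1 G2).
Proof.
move=> t1 t2 S m u v.
have m1 : maximal_stable G1 [set a | inl a \in S].
  apply: (restr_l (G:=graph_union G1 G2)) => //= x _ [s sS ad] a xa; subst x.
  by exists s => //; split => //; case: s sS ad => // b; exists b.
have m2 : maximal_stable G2 [set a | inr a \in S].
  apply: (restr_r (G:=graph_union G1 G2)) => //= x _ [s sS ad] a xa; subst x.
  by exists s => //; split => //; case: s sS ad => // b; exists b.
case: u => [a|a]; case: v => [b|b] /= ab uS vS.
- have [|//|s sS h] := t1 _ m1 a b ab; rewrite ?inE //.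
  by exists (inl s); rewrite ?inE in sS.
- by [].
- by [].
- have [|//|s sS h] := t2 _ m2 a b ab; rewrite ?inE //.
  by exists (inr s); rewrite ?inE in sS.
Qed.

Lemma join_tri : triangle_graph G1 -> triangle_graph G2 ->
  triangle_graph (graph_join G1 G2).
Proof.
move=> t1 t2 S m u v uv uS vS.
have [w wS] := max_nonempty m uS.
have st := (maxsetP m).1.
case: w wS => w wS.
- have noR : forall b, inr b \notin S.
    move=> b; apply/negP=> bS.
    by move/stableP: st => /(_ _ _ wS bS).
  have m1 : maximal_stable G1 [set a | inl a \in S].
    apply: (restr_l (G:=graph_join G1 G2)) => //= x _ [s sS ad] a xa; subst x.
    exists s => //; split => //; case: s sS ad => b sS; first by exists b.
    by rewrite (negbTE (noR b)) in sS.
  case: u v uv uS vS => [a|a] [b|b] /= ab uS vS.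
  + have [|//|s sS h] := t1 _ m1 a b ab; rewrite ?inE //.
    by exists (inl s); rewrite ?inE in sS.
  + have [|s sS h] := max_nb m1 (x:=a); rewrite ?inE //.
    by exists (inl s); rewrite ?inE in sS; rewrite //= h.
  + have [|s sS h] := max_nb m1 (x:=b); rewrite ?inE //.
    by exists (inl s); rewrite ?inE in sS; rewrite //= h.
  + by exists (inl w).
- have noL : forall b, inl b \notin S.
    move=> b; apply/negP=> bS.
    by move/stableP: st => /(_ _ _ wS bS).
  have m2 : maximal_stable G2 [set a | inr a \in S].
    apply: (restr_r (G:=graph_join G1 G2)) => //= x _ [s sS ad] a xa; subst x.
    exists s => //; split => //; case: s sS ad => b sS; last by exists b.
    by rewrite (negbTE (noL b)) in sS.
  case: u v uv uS vS => [a|a] [b|b] /= ab uS vS.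
  + by exists (inr w).
  + have [|s sS h] := max_nb m2 (x:=b); rewrite ?inE //.
    by exists (inr s); rewrite ?inE in sS; rewrite //= h.
  + have [|s sS h] := max_nb m2 (x:=a); rewrite ?inE //.
    by exists (inr s); rewrite ?inE in sS; rewrite //= h.
  + have [|//|s sS h] := t2 _ m2 a b ab; rewrite ?inE //.
    by exists (inr s); rewrite ?inE in sS.
Qed.
End Main.

Theorem proposition5 (T1 T2 : finType) (G1 : sgraph T1) (G2 : sgraph T2) :
  triangle_graph G1 -> triangle_graph G2 ->
  triangle_graph (graph_union G1 G2) /\ triangle_graph (graph_join G1 G2).
Proof. by move=> t1 t2; split; [apply: union_tri | apply: join_tri]. Qed.
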